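(* Let $q\ge 2$ and let $D$ be a directed graph on $n$ vertices which has an induced acyclic subgraph on at least $n/2$ vertices. If $D$ is $q$-solvable, then $n\ge 2\alpha(q-1)$, where $\alpha\approx 0.567$ is the unique real number satisfying $\alpha+\ln\alpha=0$.
   Context: A directed graph $D=(V,E)$ has arcs $E \subseteq \{(u,v)\in V^2 : u \neq v\}$ (bidirectional pairs allowed). An induced subgraph is acyclic if it contains no directed cycle. $N^-(v)=\{u:(u,v)\in E\}$. For $q\ge2$ let $[q]=\{0,\dots,q-1\}$. A $D$-function over $[q]$ is a map $f=(f_v)_{v\in V}:[q]^V\to[q]^V$ with each $f_v(x)$ depending only on $(x_u)_{u\in N^-(v)}$. $D$ is $q$-solvable if some $D$-function $f$ over $[q]$ has the property that for every $x\in[q]^V$ there is $v$ with $f_v(x)=x_v$. *)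

(* Defs.v *)
From mathcomp Require Import all_boot.
From Stdlib Require Import Reals.
Set Implicit Arguments. Unset Strict Implicit. Unset Printing Implicit Defensive.

(* A digraph on vertex set 'I_n is an irreflexive boolean arc relation E;
   E u v means the arc (u,v). *)
Definition loopless (n : nat) (E : rel 'I_n) : Prop := forall v, ~~ E v v.

Definition induced_acyclic (n : nat) (E : rel 'I_n) (S : {set 'I_n}) : Prop :=
  forall s : seq 'I_n, s != [::] -> all (fun v => v \in S) s -> ~~ cycle E s.

Definition is_D_function (n q : nat) (E : rel 'I_n)
    (f : ('I_n -> 'I_q) -> 'I_n -> 'I_q) : Prop :=
  forall (v : 'I_n) (x y : 'I_n -> 'I_q),
    (forall u, E u v -> x u = y u) -> f x v = f y v.

Definition q_solvable (n q : nat) (E : rel 'I_n) : Prop :=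
  exists f : ('I_n -> 'I_q) -> 'I_n -> 'I_q,
    is_D_function E f /\ forall x : 'I_n -> 'I_q, exists v, f x v = x v.

(* Main.v *)
Require Import Defs.
From mathcomp Require Import all_boot.
From Stdlib Require Import Reals Lra.
From mathcomp Require Import zify perm.
Set Implicit Arguments. Unset Strict Implicit. Unset Printing Implicit Defensive.

Definition upd n q (x : {ffun 'I_n -> 'I_q}) (v : 'I_n) (c : 'I_q) :
  {ffun 'I_n -> 'I_q} := [ffun w => if w == v then c else x w].

Definition swp n q (v : 'I_n) (c0 c : 'I_q) (x : {ffun 'I_n -> 'I_q}) :=
  upd x v (tperm c0 c (x v)).

Lemma swpK n q v (c0 c : 'I_q) : involutive (@swp n q v c0 c).
Proof.
move=> x; apply/ffunP => w; rewrite /swp /upd !ffunE eqxx.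
case: eqP => [->|] //; by rewrite tpermK.
Qed.

Lemma fiber n q (v : 'I_n) (c0 : 'I_q) (F : {ffun 'I_n -> 'I_q} -> nat) :
  \sum_(x : {ffun 'I_n -> 'I_q}) F x = \sum_(x : {ffun 'I_n -> 'I_q} | x v == c0) \sum_(c : 'I_q) F (upd x v c).
Proof.
rewrite exchange_big /=.
rewrite (partition_big (fun x : {ffun 'I_n -> 'I_q} => x v) xpredT) //=.
apply: eq_bigr => c _.
rewrite (reindex_inj (can_inj (swpK v c0 c))) /=.
apply: eq_big => x.
  by rewrite /swp /upd ffunE eqxx (canF_eq (tpermK c0 c)) tpermR.
rewrite /swp /upd ffunE eqxx (canF_eq (tpermK c0 c)) tpermR => /eqP xv.
by rewrite xv tpermL.
Qed.

Lemma card_sum (T : finType) (P : pred T) : #|[set x | P x]| = \sum_x (P x : nat).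
Proof.
rewrite -sum1_card big_mkcond /=; apply: eq_bigr => x _.
by rewrite inE; case: (P x).
Qed.

Lemma sink n (E : rel 'I_n) (A : {set 'I_n}) v0 :
  v0 \in A -> induced_acyclic E A ->
  exists2 v, v \in A & forall u, u \in A -> ~~ E v u.
Proof.
move=> Av0 acyc.
case: (boolP [exists v in A, [forall u in A, ~~ E v u]]).
  by case/exists_inP => v Av /forall_inP H; exists v.
move=> /exists_inPn H.
have H2 : forall v, v \in A -> exists2 u, u \in A & E v u.
  by move=> v /H /forall_inPn [u Au]; rewrite negbK; exists u.
pose next := fun v => if [pick u in A | E v u] is Some u then u else v.
have Hn : forall v, v \in A -> next v \in A /\ E v (next v).
  move=> v Av; rewrite /next; case: pickP => [u /andP[]|] //.
  by move=> none; case: (H2 v Av) => u Au Evu; have := none u; rewrite Au Evu.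
have HA : forall i v, v \in A -> iter i next v \in A.
  by elim=> // i IH v Av /=; exact: (Hn _ (IH _ Av)).1.
have : ~~ injectiveb (fun i : 'I_(#|'I_n|).+1 => iter i next v0).
  apply/injectiveP => inj; have := @leq_card _ _ (fun i : 'I_(#|'I_n|).+1 => iter i next v0) inj.
  by rewrite !card_ord ltnn.
case/injectivePn => i [j neq eqij].
have [k per] : exists k, iter k.+1 next (iter (minn i j) next v0) = iter (minn i j) next v0.
  case: (ltngtP i j) => [lt|gt|eq].
  - exists (j - i).-1; rewrite prednK; last by rewrite subn_gt0.
    rewrite -iterD subnK; last exact: ltnW.
    exact: (esym eqij).
  - exists (i - j).-1; rewrite prednK; last by rewrite subn_gt0.
    rewrite -iterD subnK; last exact: ltnW.
    exact: eqij.
  - by move: neq; rewrite (ord_inj eq) eqxx.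
set y := iter (minn i j) next v0 in per.
have cyc : fcycle next (orbit next y) by apply/(orbitPcycle 3 0); exists k.
have Ay : y \in A := HA _ _ Av0.
have allA : all (fun z => z \in A) (orbit next y).
  by apply/allP => z /trajectP [l _ ->]; exact: HA.
have cE : cycle E (orbit next y).
  apply: (sub_in_cycle (P:=mem A) (e:=frel next)) => //.
  by move=> a b Aa Ab /eqP <-; exact: (Hn a Aa).2.
have ne : orbit next y != [::].
  by apply/eqP => e; have := in_orbit next y; rewrite e.
by have := acyc _ ne allA; rewrite cE.
Qed.

Lemma updE n q (x : {ffun 'I_n -> 'I_q}) v c w :
  upd x v c w = if w == v then c else x w.
Proof. by rewrite ffunE. Qed.

Lemma upd_inv n q (E : rel 'I_n) (f : ('I_n -> 'I_q) -> 'I_n -> 'I_q) x v c u :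
  is_D_function E f -> ~~ E v u -> f (upd x v c) u = f x u.
Proof.
move=> Df nE; apply: Df => w Ewu; rewrite updE.
case: eqP => // ewv; by move: nE; rewrite -ewv Ewu.
Qed.

Lemma sum_eq1 q (a : 'I_q) : \sum_(c : 'I_q) (a == c : nat) = 1.
Proof.
rewrite (bigD1 a) //= eqxx big1 // => c; rewrite eq_sym => /negPf -> //.
Qed.

Lemma sum_neq1 q (a : 'I_q) : \sum_(c : 'I_q) (a != c : nat) = q - 1.
Proof.
rewrite (bigD1 a) //= eqxx add0n.
rewrite (eq_bigr (fun _ => 1)); last by move=> c; rewrite eq_sym => ->.
by rewrite sum1_card cardC1 card_ord subn1.
Qed.

Lemma sum_const_ffun n q : \sum_(x : {ffun 'I_n -> 'I_q}) 1 = expn q n.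
Proof. by rewrite sum1_card card_ffun !card_ord. Qed.

Lemma Csum n q (E : rel 'I_n) (f : ('I_n -> 'I_q) -> 'I_n -> 'I_q) (u : 'I_n) (c0 : 'I_q) :
  is_D_function E f -> loopless E ->
  (\sum_(x : {ffun 'I_n -> 'I_q}) (f x u == x u : nat)) * q = expn q n.
Proof.
move=> Df ll.
rewrite -sum_const_ffun (fiber u c0) (fiber u c0 (fun _ => 1)) big_distrl /=.
apply: eq_bigr => x _.
rewrite sum1_card card_ord.
rewrite (eq_bigr (fun c => (f x u == c : nat))) ?sum_eq1 ?mul1n //.
by move=> c _; rewrite (upd_inv _ _ Df (ll u)) updE eqxx.
Qed.

Definition Wb n q (f : ('I_n -> 'I_q) -> 'I_n -> 'I_q) (A : {set 'I_n})
  (x : {ffun 'I_n -> 'I_q}) : bool := [forall v in A, f x v != x v].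

Lemma acyc_sub n (E : rel 'I_n) (A B : {set 'I_n}) :
  B \subset A -> induced_acyclic E A -> induced_acyclic E B.
Proof.
move=> sBA acyc s ne allB; apply: acyc ne _.
by apply/allP => z /(allP allB) /(subsetP sBA).
Qed.

Lemma Wstep n q (E : rel 'I_n) (f : ('I_n -> 'I_q) -> 'I_n -> 'I_q) (A : {set 'I_n}) v
  (x : {ffun 'I_n -> 'I_q}) c :
  is_D_function E f -> loopless E -> v \in A -> (forall u, u \in A -> ~~ E v u) ->
  Wb f A (upd x v c) = Wb f (A :\ v) x && (f x v != c) /\
  Wb f (A :\ v) (upd x v c) = Wb f (A :\ v) x.
Proof.
move=> Df ll Av sk; split.
  apply/idP/idP.
  - move/forall_inP => H; apply/andP; split.
      apply/forall_inP => w /setD1P [nwv Aw]; have := H w Aw.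
      by rewrite (upd_inv _ _ Df (sk w Aw)) updE (negPf nwv).
    by have := H v Av; rewrite (upd_inv _ _ Df (ll v)) updE eqxx.
  - case/andP => /forall_inP H Hv; apply/forall_inP => w Aw.
    case: (eqVneq w v) => [->|nwv].
      by rewrite (upd_inv _ _ Df (ll v)) updE eqxx.
    rewrite (upd_inv _ _ Df (sk w Aw)) updE (negPf nwv); apply: H.
    by rewrite in_setD1 nwv Aw.
apply: eq_forallb_in => w /setD1P [nwv Aw].
by rewrite (upd_inv _ _ Df (sk w Aw)) updE (negPf nwv).
Qed.

Lemma Wcount n q (E : rel 'I_n) (f : ('I_n -> 'I_q) -> 'I_n -> 'I_q) :
  is_D_function E f -> loopless E -> 0 < q ->
  forall k (A : {set 'I_n}), #|A| = k -> induced_acyclic E A ->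
  (\sum_(x : {ffun 'I_n -> 'I_q}) (Wb f A x : nat)) * expn q k = expn (q-1) k * expn q n.
Proof.
move=> Df ll q0; elim=> [|k IH] A cA acyc.
  rewrite (cards0_eq cA) expn0 muln1 mul1n -sum_const_ffun.
  apply: eq_bigr => x _.
  have -> : Wb f set0 x = true by apply/forall_inP => v; rewrite inE.
  by [].
have [v0 Av0] : exists v0, v0 \in A by apply/card_gt0P; rewrite cA.
have [v Av sk] := sink Av0 acyc.
have cA' : #|A :\ v| = k by move: cA; rewrite (cardsD1 v) Av add1n => -[].
have acyc' : induced_acyclic E (A :\ v) by apply: acyc_sub acyc; exact: subD1set.
have IH' := IH _ cA' acyc'.
pose c0 := Ordinal q0.
have key : (\sum_(x : {ffun 'I_n -> 'I_q}) (Wb f A x : nat)) * q =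
           (q - 1) * \sum_(x : {ffun 'I_n -> 'I_q}) (Wb f (A :\ v) x : nat).
  rewrite (fiber v c0) (fiber v c0 (fun x => (Wb f (A :\ v) x : nat))).
  rewrite big_distrl big_distrr /=; apply: eq_bigr => x _.
  have e1 : \sum_(c : 'I_q) (Wb f A (upd x v c) : nat) = Wb f (A :\ v) x * (q - 1).
    rewrite (eq_bigr (fun c => ((Wb f (A :\ v) x && (f x v != c)) : nat))); last first.
      by move=> c _; rewrite (Wstep x c Df ll Av sk).1.
    case: (Wb f (A :\ v) x) => /=; first by rewrite sum_neq1 mul1n.
    by rewrite big1.
  have e2 : \sum_(c : 'I_q) (Wb f (A :\ v) (upd x v c) : nat) = Wb f (A :\ v) x * q.
    rewrite (eq_bigr (fun c => (Wb f (A :\ v) x : nat))); last first.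
      by move=> c _; rewrite (Wstep x c Df ll Av sk).2.
    by rewrite sum_nat_const card_ord mulnC.
  by rewrite e1 e2 mulnAC mulnC.
rewrite expnSr mulnA mulnAC key -mulnA IH' mulnA expnS.
by [].
Qed.

Lemma union_bound n q (E : rel 'I_n) (f : ('I_n -> 'I_q) -> 'I_n -> 'I_q) (A : {set 'I_n}) :
  is_D_function E f -> loopless E -> 0 < q ->
  (forall x : 'I_n -> 'I_q, exists v, f x v = x v) ->
  (\sum_(x : {ffun 'I_n -> 'I_q}) (Wb f A x : nat)) * q <= (n - #|A|) * expn q n.
Proof.
move=> Df ll q0 Hs.
have le1 : \sum_(x : {ffun 'I_n -> 'I_q}) (Wb f A x : nat) <=
   \sum_(x : {ffun 'I_n -> 'I_q}) \sum_(u in ~: A) (f x u == x u : nat).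
  apply: leq_sum => x _.
  case Wx: (Wb f A x) => //.
  have [v fv] := Hs x.
  have vA : v \in ~: A.
    rewrite inE; apply/negP => Av; move/forall_inP: Wx => /(_ v Av).
    by rewrite fv eqxx.
  by rewrite (bigD1 v) //= fv eqxx.
rewrite exchange_big /= in le1.
apply: (leq_trans (leq_mul le1 (leqnn q))).
rewrite big_distrl /=.
rewrite (eq_bigr (fun _ => expn q n)); last by move=> u _; rewrite (Csum _ (Ordinal q0) Df ll).
rewrite sum_nat_const.
have : #|A| + #|~: A| = n by rewrite cardsC card_ord.
move=> h; have -> : n - #|A| = #|~: A| by move: h; clear; lia.
by [].
Qed.

Lemma main_nat n q (E : rel 'I_n) (f : ('I_n -> 'I_q) -> 'I_n -> 'I_q) (A : {set 'I_n}) :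
  is_D_function E f -> loopless E -> 0 < q -> induced_acyclic E A ->
  (forall x : 'I_n -> 'I_q, exists v, f x v = x v) ->
  expn (q-1) #|A| * q <= (n - #|A|) * expn q #|A|.
Proof.
move=> Df ll q0 acyc Hs.
have c := Wcount Df ll q0 (erefl #|A|) acyc.
have b := union_bound A Df ll q0 Hs.
have qn : 0 < expn q n by rewrite expn_gt0 q0.
rewrite -(leq_pmul2r qn).
rewrite mulnAC -c mulnAC.
rewrite -[X in _ <= X]mulnA [expn q #|A| * _]mulnC mulnA.
by rewrite leq_pmul2r ?expn_gt0 ?q0.
Qed.

Lemma pow_exp (y : R) (k : nat) : (exp y ^ k = exp (INR k * y))%R.
Proof.
induction k as [|k IH].
- change (1 = exp (0 * y))%R. rewrite Rmult_0_l exp_0; reflexivity.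
- change (exp y * exp y ^ k = exp (INR (S k) * y))%R. rewrite IH S_INR -exp_plus. f_equal. ring.
Qed.

Lemma real_part (Q m t : nat) (alpha : R) : (1 <= Q)%coq_nat -> (m <= t)%coq_nat ->
  (INR Q * INR Q ^ m <= INR t * (INR Q + 1) ^ m)%R -> (0 < alpha)%R ->
  (alpha + ln alpha = 0)%R -> (alpha * INR Q <= INR t)%R.
Proof.
intros HQ Hmt Hineq apos aeq.
assert (x1 : (1 <= INR Q)%R) by (apply le_INR in HQ; simpl in HQ; exact HQ).
destruct (Rle_or_lt (alpha * INR Q) (INR t)) as [H|H]; [exact H|].
exfalso.
assert (ea : (alpha * exp alpha = 1)%R).
{ assert (e : alpha = exp (- alpha)).
  { replace (- alpha)%R with (ln alpha) by lra. rewrite exp_ln; lra. }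
  rewrite exp_Ropp in e. 
  assert (0 < exp alpha)%R by apply exp_pos.
  rewrite {1}e Rinv_l; lra. }
assert (Hm : (INR m <= INR t)%R) by (apply le_INR; exact Hmt).
assert (Hmx : (INR m * / INR Q < alpha)%R).
{ apply Rmult_lt_reg_r with (INR Q); [lra|].
  rewrite Rmult_assoc Rinv_l; lra. }
assert (Hp : ((1 + / INR Q) ^ m <= exp alpha)%R).
{ apply Rle_trans with ((exp (/ INR Q) ^ m)%R).
  - apply pow_incr. split.
    + assert (0 < / INR Q)%R by (apply Rinv_0_lt_compat; lra). lra.
    + apply exp_ineq1_le.
  - rewrite pow_exp. left. apply exp_increasing. exact Hmx. }
assert (Hsplit : ((INR Q + 1) ^ m = INR Q ^ m * (1 + / INR Q) ^ m)%R).
{ rewrite <- Rpow_mult_distr. f_equal. field. lra. }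
assert (Hxm : (0 < INR Q ^ m)%R) by (apply pow_lt; lra).
rewrite Hsplit in Hineq.
assert (Hq : (INR Q <= INR t * exp alpha)%R).
{ apply Rmult_le_reg_r with ((INR Q ^ m)%R); [exact Hxm|].
  assert (0 <= INR t)%R by apply pos_INR.
  assert (0 <= (1 + / INR Q) ^ m)%R.
  { apply pow_le. assert (0 < / INR Q)%R by (apply Rinv_0_lt_compat; lra). lra. }
  assert (0 <= INR t * INR Q ^ m)%R by (apply Rmult_le_pos; lra).
  nra. }
assert (0 <= INR t)%R by apply pos_INR.
nra.
Qed.

Lemma sub_card (T : finType) (S : {set T}) k :
  k <= #|S| -> exists2 A : {set T}, A \subset S & #|A| = k.
Proof.
elim: k => [|k IH] hk.
  by exists set0; rewrite ?sub0set ?cards0.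
have [A sAS cA] := IH (ltnW hk).
have [x xSA] : exists x, x \in S :\: A.
  by apply/card_gt0P; rewrite cardsDS // cA subn_gt0.
move: xSA; rewrite in_setD => /andP [xA xS].
exists (x |: A); first by rewrite subUset sub1set xS sAS.
by rewrite cardsU1 xA cA.
Qed.

Lemma INR_expn a b : INR (expn a b) = (INR a ^ b)%R.
Proof.
elim: b => [|b IH]; first by rewrite expn0.
by rewrite expnS mulnE mult_INR IH.
Qed.

Theorem corollary15 (q n : nat) (E : rel 'I_n) (alpha : R) :
  (2 <= q)%N ->
  loopless E ->
  (exists S : {set 'I_n}, (n <= 2 * #|S|)%N /\ induced_acyclic E S) ->
  q_solvable q E ->
  (0 < alpha)%R -> (alpha + ln alpha = 0)%R ->
  (INR n >= 2 * alpha * INR (q - 1))%R.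
Proof.
move=> q2 ll [S [hS acS]] [f [Df Hs]] apos aeq.
have q0 : 0 < q by apply: leq_trans q2.
have n0 : 0 < n.
  case: n E S hS acS f Df Hs ll => // E S hS acS f Df Hs ll.
  by have [[]] := Hs (fun _ => Ordinal q0).
pose s := n - n./2.
have hs : [/\ 0 < s, s <= #|S|, (s - 1 <= n - s) & (n - s) + (n - s) <= n].
  have := odd_double_half n; rewrite /s -addnn.
  case: (odd n) => /= e; move: e n0 hS; clear; move: (n ./2) => h; move: (#|S|) => k; move=> *; split; lia.
case: hs => s0 sS smt tn.
have [A sAS cA] := sub_card sS.
have acA : induced_acyclic E A := acyc_sub sAS acS.
have := main_nat Df ll q0 acA Hs.
rewrite cA -(prednK s0).
set m := s.-1.
have es : s = m.+1 by rewrite /m prednK.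
rewrite es in smt tn; rewrite subn1 /= in smt.
rewrite [expn q m.+1]expnSr mulnA leq_pmul2r // expnS.
move=> /leP /le_INR; rewrite !mulnE !mult_INR !INR_expn => hineq.
have [Q eQ] : exists Q, q = Q.+1 by exists q.-1; rewrite prednK.
have Qeq : q - 1 = Q by rewrite eQ subn1.
rewrite Qeq.
rewrite Qeq eQ S_INR in hineq.
have Q1 : (1 <= Q)%coq_nat by apply/leP; rewrite -ltnS -eQ.
have := real_part Q1 (elimT leP smt) hineq apos aeq.
move/leP: tn => /le_INR; rewrite plus_INR => htn.
lra.
Qed.
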